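(* Let $p\in[1,\infty]$, $d\in\mathbb N$, $m_0:=d$, $m_1\le m_2\le\cdots$ positive integers, $\mathbf W_n\in\mathbb R^{m_n\times m_{n-1}}$ and $\mathbf b_n\in\mathbb R^{m_n}$ for $n\in\mathbb N$. Suppose that for every sequence $(J_n)_{n\in\mathbb N}$ with $J_n\in\mathcal D_{m_n}$ both limits $$\lim_{n\to\infty}\mathbf I_{\infty,m_n}\prod_{i=1}^nJ_i\mathbf W_i \ \text{ in } \mathcal B(\mathbb R^d,\ell^p)\qquad\text{and}\qquad \lim_{n\to\infty}\mathbf I_{\infty,m_n}\sum_{i=1}^n\Big(\prod_{k=i+1}^nJ_k\mathbf W_k\Big)J_i\mathbf b_i\ \text{ in }\ell^p$$ exist. Then the ReLU networks $\mathcal N_n$ converge pointwise on $[0,1]^d$, i.e. for each $x\in[0,1]^d$ the sequence $\tilde{\mathcal N}_n(x)$ converges in $\ell^p$.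
   Context: $\sigma(t)=\max(t,0)$ applied componentwise; $\mathcal N_n(x):=\big(\sigma(\mathbf W_n\cdot+\mathbf b_n)\circ\cdots\circ\sigma(\mathbf W_1\cdot+\mathbf b_1)\big)(x)\in\mathbb R^{m_n}$ for $x\in[0,1]^d$, and $\tilde{\mathcal N}_n(x)\in\ell^p$ is the sequence whose first $m_n$ entries are those of $\mathcal N_n(x)$ and whose remaining entries are $0$. $\mathcal D_m$ is the set of $m\times m$ diagonal matrices with diagonal entries in $\{0,1\}$. $\mathbf I_{\infty,m}$ is the matrix with infinitely many rows and $m$ columns whose top $m\times m$ block is the identity and all other entries zero (the embedding $\mathbb R^m\to\ell^p$). $\mathcal B(\mathbb R^d,\ell^p)$ is the Banach space of bounded linear operators $\mathbb R^d\to\ell^p$ with operator norm induced by $\ell^p$ norms. Products are ordered $\prod_{i=k}^nA_i=A_n\cdots A_k$, and an empty product ($n<k$) is the $m_n\times m_n$ identity. *)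

(* Defs.v *)
From HB Require Import structures.
From mathcomp Require Import all_boot all_order all_algebra.
From mathcomp Require Import all_classical all_reals all_analysis.
Set Implicit Arguments. Unset Strict Implicit. Unset Printing Implicit Defensive.
Import Order.TTheory GRing.Theory Num.Theory.
Local Open Scope classical_set_scope.
Local Open Scope ring_scope.

Section Defs.
Variable R : realType.

(* l^p norm of a real sequence, p in [1, +oo] (value +oo if not in l^p) *)
Definition lpnorm (p : \bar R) (a : nat -> R) : \bar R :=
  match p with
  | r%:E => poweR (\sum_(0 <= k <oo) ((`|a k| `^ r)%:E))%E r^-1
  | +oo%E => ereal_sup (range (fun k => (`|a k|)%:E))
  | -oo%E => +oo%E
  end.

Definition ext (k : nat) (x : 'I_k -> R) : nat -> R :=
  fun j => match insub j with Some i => x i | None => 0 end.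

Definition embed (k : nat) (v : 'cV[R]_k) : nat -> R := ext (fun i => v i 0).

(* I_{oo,k} M for M : k x d, given as its d columns (elements of R^nat) *)
Definition embed_mx (k d : nat) (M : 'M[R]_(k, d)) : 'I_d -> nat -> R :=
  fun j => ext (fun i => M i j).

(* operator norm in B(R^d, l^p) of the linear map x |-> sum_j x_j A_j *)
Definition opnorm (p : \bar R) (d : nat) (A : 'I_d -> nat -> R) : \bar R :=
  ereal_sup [set lpnorm p (fun k => \sum_j x j * A j k) |
             x in [set x : 'I_d -> R | (lpnorm p (ext x) <= 1)%E]].

Definition lp_converges (p : \bar R) (a : nat -> nat -> R) : Prop :=
  exists l : nat -> R, forall eps : R, 0 < eps ->
    \forall n \near \oo, (lpnorm p (fun k => (a n k - l k)%R) <= eps%:E)%E.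

Definition op_converges (p : \bar R) (d : nat) (A : nat -> 'I_d -> nat -> R) : Prop :=
  exists L : 'I_d -> nat -> R, forall eps : R, 0 < eps ->
    \forall n \near \oo, (opnorm p (fun j k => (A n j k - L j k)%R) <= eps%:E)%E.

Definition is_D (k : nat) (J : 'M[R]_k) : Prop :=
  (forall i j, i != j -> J i j = 0) /\ (forall i, J i i = 0 \/ J i i = 1).

Definition relu (k : nat) (v : 'cV[R]_k) : 'cV[R]_k := map_mx (fun t => Num.max t 0) v.

Variable m : nat -> nat.
(* W n, b n, J n stand for W_{n+1}, b_{n+1}, J_{n+1} of the paper *)
Variable W : forall n, 'M[R]_(m n.+1, m n).
Variable b : forall n, 'cV[R]_(m n.+1).

Fixpoint relu_net (n : nat) (x : 'cV[R]_(m 0%N)) : 'cV[R]_(m n) :=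
  match n return 'cV[R]_(m n) with
  | 0 => x
  | n'.+1 => relu (W n' *m relu_net n' x + b n')
  end.

Variable J : forall n, 'M[R]_(m n.+1).

Fixpoint prodJW (n : nat) : 'M[R]_(m n, m 0%N) :=
  match n return 'M[R]_(m n, m 0%N) with
  | 0 => 1%:M
  | n'.+1 => J n' *m W n' *m prodJW n'
  end.

(* sum_{i=1}^n (prod_{k=i+1}^n J_k W_k) J_i b_i *)
Fixpoint biasJW (n : nat) : 'cV[R]_(m n) :=
  match n return 'cV[R]_(m n) with
  | 0 => 0
  | n'.+1 => J n' *m W n' *m biasJW n' + J n' *m b n'
  end.

End Defs.

(* Main.v *)
Require Import Defs.
From HB Require Import structures.
From mathcomp Require Import all_boot all_order all_algebra.
From mathcomp Require Import all_classical all_reals all_analysis.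
From mathcomp Require Import ring lra.
Import Order.TTheory GRing.Theory Num.Theory.
Local Open Scope ring_scope.

Section Helpers.
Local Open Scope classical_set_scope.

Lemma meas_nat (R : realType) (f : nat -> R) : measurable_fun [set: nat] f.
Proof. by move=> _ Y _; rewrite /measurable /=; exact: I. Qed.

Lemma lpnorm_Lnorm (R: realType) (r:R) (a: nat -> R): 0<r ->
  lpnorm r%:E a = ('N[counting]_r%:E[EFin \o a])%E.
Proof. by move=> r0; rewrite Lnorm_counting //= /lpnorm. Qed.

Lemma lp_tri (R : realType) (p : \bar R) (a b : nat -> R) : (1 <= p)%E ->
  (lpnorm p (fun k => (a k + b k)%R) <= lpnorm p a + lpnorm p b)%E.
Proof.
case: p => [r|_|//]; last first.
  rewrite /lpnorm; apply: ge_ereal_sup => _ [k _ <-] /=.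
  apply: le_trans (_ : (`|a k| + `|b k|)%:E <= _)%E.
    by rewrite lee_fin ler_normD.
  rewrite EFinD; apply: leeD; apply: ereal_sup_ubound; by exists k.
rewrite lee_fin => r1.
have r0 : 0 < r by apply: lt_le_trans r1.
rewrite !lpnorm_Lnorm //.
have := (minkowski_EFin counting (@meas_nat R a) (@meas_nat R b) r1).
by [].
Qed.

Lemma lpnorm_ge0 (R : realType) (p : \bar R) (a : nat -> R) :
  (0 <= lpnorm p a)%E.
Proof.
case: p => [r| |] /=; first exact: poweR_ge0.
  apply: le_trans (_ : (`|a 0%N|)%:E <= _)%E; first by rewrite lee_fin.
  by apply: ereal_sup_ubound; exists 0%N.
by [].
Qed.

Lemma lp_nat_mul (R : realType) (p : \bar R) (a : nat -> R) (n : nat) :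
  (1 <= p)%E ->
  (lpnorm p (fun k => (n.+1%:R * a k)%R) <= (n.+1%:R)%:E * lpnorm p a)%E.
Proof.
move=> p1; elim: n => [|n IH].
  have -> : (fun k => (1%:R * a k)%R) = a by apply/funext => k; rewrite mul1r.
  by rewrite mul1e.
have -> : (fun k => (n.+2%:R * a k)%R) = (fun k => (n.+1%:R * a k + a k)%R).
  by apply/funext => k; rewrite [n.+2%:R]mulrSr mulrDl mul1r.
apply: (le_trans (@lp_tri R p (fun k => (n.+1%:R * a k)%R) a p1)).
rewrite [n.+2%:R]mulrSr EFinD ge0_muleDl ?lee_fin // mul1e.
by apply: leeD.
Qed.

Lemma powR_le_self (R : realType) (a r : R) : 0 <= a <= 1 -> 1 <= r -> a `^ r <= a.
Proof.
move=> /andP[a0 a1] r1; have [->|an0] := eqVneq a 0.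
  by rewrite powR0 // gt_eqF // (lt_le_trans _ r1).
by apply: ge1r_powR => //; rewrite lt0r an0 a0.
Qed.

Lemma lp_le1 (R : realType) (p : \bar R) (c : nat -> R) : (1 <= p)%E ->
  (forall k, `|c k| <= 1) -> (forall n, \sum_(0 <= k < n) `|c k| <= 1) ->
  (lpnorm p c <= 1)%E.
Proof.
case: p => [r|_|//]; last first.
  move=> c1 _; rewrite /lpnorm; apply: ge_ereal_sup => _ [k _ <-] /=.
  by rewrite lee_fin.
rewrite lee_fin => r1 c1 cs /=.
have r0 : 0 < r by apply: lt_le_trans r1.
set S := (\sum_(0 <= k <oo) _)%E.
have S0 : (0 <= S)%E by apply: nneseries_ge0 => k _ _; rewrite lee_fin powR_ge0.
have S1 : (S <= 1)%E.
  rewrite /S (cvg_lim _ (ereal_nondecreasing_cvgn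
     (ereal_nondecreasing_series (fun n _ _ => _))))//.
  apply: ge_ereal_sup => _ [n _ <-] /=.
  rewrite sumEFin lee_fin; apply: le_trans (cs n).
  apply: ler_sum => k _; apply: powR_le_self => //.
  by rewrite normr_ge0 c1.
clearbody S; move: S S0 S1 => [s| |] //; rewrite !lee_fin => s0 s1.

have -> : (1 : R) = 1 `^ r^-1 by rewrite powR1.
apply: ge0_ler_powR => //; first by rewrite invr_ge0 ltW.
  by rewrite nnegrE.

Qed.

Lemma ext_val (R : realType) (d : nat) (y : 'I_d -> R) (i : 'I_d) :
  ext y i = y i.
Proof. by rewrite /ext valK. Qed.

Lemma ext_out (R : realType) (d : nat) (y : 'I_d -> R) (k : nat) :
  (d <= k)%N -> ext y k = 0.
Proof. by move=> dk; rewrite /ext insubN // -leqNgt. Qed.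

Lemma ext_sum (R : realType) (d : nat) (y : 'I_d -> R) (n : nat) :
  \sum_(0 <= k < n) `|ext y k| <= \sum_(i < d) `|y i|.
Proof.
have -> : \sum_(i < d) `|y i| = \sum_(0 <= k < n + d) `|ext y k|.
  rewrite (@big_cat_nat _ _ _ d 0 (n + d)) ?leq_addl //=.
  rewrite [X in _ = _ + X]big1_seq ?addr0; last first.
    move=> k /andP[_]; rewrite mem_index_iota => /andP[dk _].
    by rewrite ext_out // normr0.
  by rewrite big_mkord; apply: eq_bigr => i _; rewrite ext_val.
rewrite (@big_cat_nat _ _ _ n 0 (n + d)) ?leq_addr //=.
by rewrite lerDl sumr_ge0.
Qed.

Lemma relu_diag (R : realType) (k : nat) (v : 'cV[R]_k) :
  relu v = diag_mx (\row_i (if 0 <= v i 0 then (1:R) else 0)) *m v.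
Proof.
apply/matrixP => i j; rewrite mul_diag_mx !mxE (ord1 j).
by case: lerP => h; rewrite ?mul1r ?mul0r.
Qed.

Lemma diag_is_D (R : realType) (k : nat) (v : 'cV[R]_k) :
  is_D (diag_mx (\row_i (if 0 <= v i 0 then (1:R) else 0))).
Proof.
split => [i j ij|i]; rewrite !mxE.
  by rewrite (negbTE ij) mulr0n.
rewrite eqxx mulr1n; case: ifP => _; by [left|right].
Qed.

End Helpers.

Definition Jact (R : realType) (m : nat -> nat)
  (W : forall n, 'M[R]_(m n.+1, m n)) (b : forall n, 'cV[R]_(m n.+1))
  (x : 'cV[R]_(m 0%N)) (n : nat) : 'M[R]_(m n.+1) :=
  diag_mx (\row_i (if 0 <= (W n *m relu_net W b n x + b n) i 0 then (1:R) else 0)).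
Arguments Jact {R m} W b x n.

Lemma relu_net_eq (R : realType) (m : nat -> nat)
  (W : forall n, 'M[R]_(m n.+1, m n)) (b : forall n, 'cV[R]_(m n.+1))
  (x : 'cV[R]_(m 0%N)) (n : nat) :
  relu_net W b n x = prodJW W (Jact W b x) n *m x + biasJW W b (Jact W b x) n.
Proof.
elim: n => [|n IH] /=; first by rewrite mul1mx addr0.
rewrite relu_diag.
have -> : Jact W b x n *m W n *m prodJW W (Jact W b x) n *m x +
   (Jact W b x n *m W n *m biasJW W b (Jact W b x) n + Jact W b x n *m b n)
   = Jact W b x n *m (W n *m relu_net W b n x + b n).
  by rewrite IH !mulmxDr !mulmxA addrA.
by [].
Qed.

Lemma embed_eq (R : realType) (k d : nat) (P : 'M[R]_(k, d)) (x : 'cV[R]_d)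
  (B : 'cV[R]_k) (j : nat) :
  embed (P *m x + B) j = \sum_i x i 0 * embed_mx P i j + embed B j.
Proof.
rewrite /embed /embed_mx /ext; case: insub => [i|].
  rewrite !mxE; congr (_ + _); apply: eq_bigr => l _; rewrite mulrC.
  by [].
by rewrite big1 ?add0r // => l _; rewrite mulr0.
Qed.

Theorem theorem3p6 (R : realType) (p : \bar R) (m : nat -> nat)
  (W : forall n, 'M[R]_(m n.+1, m n)) (b : forall n, 'cV[R]_(m n.+1)) :
  (1 <= p)%E ->
  (forall n, (0 < m n.+1)%N) ->
  (forall n, (m n.+1 <= m n.+2)%N) ->
  (forall J : forall n, 'M[R]_(m n.+1), (forall n, is_D (J n)) ->
     op_converges p (fun n => embed_mx (prodJW W J n)) /\
     lp_converges p (fun n => embed (biasJW W b J n))) ->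
  forall x : 'cV[R]_(m 0%N), (forall i, 0 <= x i 0 <= 1) ->
    lp_converges p (fun n => embed (relu_net W b n x)).
Proof.
move=> p1 _ _ H x x01.
have [[L HL] [c Hc]] := H (Jact W b x) (fun n => @diag_is_D R _ _).
pose K := (m 0%N).+1.
have K0 : 0 < (K%:R : R) by rewrite ltr0n.
have K0' : (K%:R : R) != 0 by rewrite gt_eqF.
exists (fun k => \sum_j x j 0 * L j k + c k).
move=> e e0.
have e1 : 0 < e / 2 / K%:R by rewrite !divr_gt0.
have e2 : 0 < e / 2 by rewrite divr_gt0.
apply: filterS2 (HL _ e1) (Hc _ e2) => n h1 h2.
pose A := embed_mx (prodJW W (Jact W b x) n).
pose B := embed (biasJW W b (Jact W b x) n).
pose u := fun k => \sum_j (x j 0 / K%:R) * (A j k - L j k).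
have -> : (fun k => embed (relu_net W b n x) k - (\sum_j x j 0 * L j k + c k))
   = (fun k => K%:R * u k + (B k - c k)).
  apply/funext => k; rewrite relu_net_eq embed_eq /u mulr_sumr.
  have -> : \sum_j K%:R * (x j 0 / K%:R * (A j k - L j k)) =
            \sum_j x j 0 * A j k - \sum_j x j 0 * L j k.
    by rewrite -sumrB; apply: eq_bigr => j _; field.
  rewrite /A /B; ring.
apply: (le_trans (@lp_tri R p (fun k => K%:R * u k) (fun k => B k - c k) p1)).
have hu : (lpnorm p u <= opnorm p (fun j k => (A j k - L j k)%R))%E.
  apply: ereal_sup_ubound; exists (fun j => x j 0 / K%:R); last by [].
  rewrite /=; apply: lp_le1 => //.
    move=> k; rewrite /ext; case: insub => [i|]; last by rewrite normr0.
    have /andP[xi0 xi1] := x01 i.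
    rewrite ger0_norm ?divr_ge0 ?ler0n // ler_pdivrMr // mul1r.
    by apply: (le_trans xi1); rewrite ler1n.
  move=> N; apply: (le_trans (@ext_sum R _ _ N)).
  apply: (@le_trans _ _ (\sum_(i < m 0%N) K%:R^-1)).
    apply: ler_sum => i _; have /andP[xi0 xi1] := x01 i.
    by rewrite ger0_norm ?divr_ge0 ?ler0n // ler_piMl // invr_ge0 ler0n.
  rewrite sumr_const card_ord.
  have -> : (K%:R : R)^-1 *+ m 0%N = (m 0%N)%:R / K%:R by rewrite mulr_natl.
  rewrite ler_pdivrMr // mul1r ler_nat.
  exact: leqnSn.
apply: (@le_trans _ _ ((K%:R)%:E * (e / 2 / K%:R)%:E + (e / 2)%:E)%E).
  apply: leeD => //.
  apply: (le_trans (@lp_nat_mul R p u (m 0%N) p1)).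
  apply: lee_pmul; try exact: lpnorm_ge0; try exact: (le_trans hu h1).
    by rewrite lee_fin ler0n.
  by [].
rewrite -EFinM -EFinD lee_fin.
have -> : K%:R * (e / 2 / K%:R) = e / 2 by field.
lra.
Qed.
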